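(* Let $\alpha\in(0,1]$, $F\in C^{1,\alpha}_{\mathsf h}(\mathbb H,\mathbb R^2)$ and $p\in\mathbb H$ nondegenerate for $F$. Let $F_{p,r}(q):=\big(F(p\,\delta_r(q))-F(p)\big)/r$ for $r>0$ and $F_{p,0}(q):=L(q):=\nabla_{\mathsf h}F(p)\,q^{\mathsf h}$. Then for every $\varepsilon>0$ and every compact $K\subseteq L(B(0,\varepsilon))$ there exists $\bar r>0$ such that $K\subseteq F_{p,r}(B(0,\varepsilon))$ for every $r\in[0,\bar r]$.
   Context: The Heisenberg group $\mathbb H$ is $\mathbb R^3$ with product $(x^1,x^2,x^3)(y^1,y^2,y^3)=(x^1+y^1,x^2+y^2,x^3+y^3+x^1y^2-x^2y^1)$; $x^{\mathsf h}=(x^1,x^2)$. Dilations $\delta_r(x)=(rx^1,rx^2,r^2x^3)$. $\mathsf d$ is a fixed left-invariant, $1$-homogeneous distance on $\mathbb H$; $B(x,r)$ is the open $\mathsf d$-ball. $X_1=\partial_1-x^2\partial_3$, $X_2=\partial_2+x^1\partial_3$. $C^{1,\alpha}_{\mathsf h}(\mathbb H,\mathbb R^2)$: maps $F$ with $X_1F,X_2F$ existing everywhere and $\nabla_{\mathsf h}F=[X_1F,X_2F]$ $\alpha$-Hölder w.r.t. $\mathsf d$ on bounded sets. $p$ nondegenerate: $\nabla_{\mathsf h}F(p)$ invertible. *)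

(* Defs.v *)
From Stdlib Require Import Reals Lra List.
Open Scope R_scope.

Record Hpt := mkH { hx1 : R; hx2 : R; hx3 : R }.

Definition h0 : Hpt := mkH 0 0 0.

Definition hmul (x y : Hpt) : Hpt :=
  mkH (hx1 x + hx1 y) (hx2 x + hx2 y)
      (hx3 x + hx3 y + hx1 x * hx2 y - hx2 x * hx1 y).

Definition hdil (r : R) (x : Hpt) : Hpt :=
  mkH (r * hx1 x) (r * hx2 x) (r * r * hx3 x).

Definition is_homog_dist (d : Hpt -> Hpt -> R) : Prop :=
  (forall x y, 0 <= d x y) /\
  (forall x y, d x y = 0 <-> x = y) /\
  (forall x y, d x y = d y x) /\
  (forall x y z, d x z <= d x y + d y z) /\
  (forall z x y, d (hmul z x) (hmul z y) = d x y) /\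
  (forall r x y, 0 < r -> d (hdil r x) (hdil r y) = r * d x y).

Definition hball (d : Hpt -> Hpt -> R) (x : Hpt) (r : R) (y : Hpt) : Prop :=
  d x y < r.

Definition vderiv_lim (g : R -> R * R) (t0 : R) (l : R * R) : Prop :=
  derivable_pt_lim (fun t => fst (g t)) t0 (fst l) /\
  derivable_pt_lim (fun t => snd (g t)) t0 (snd l).

(* X_1 F (x) = l : derivative of t |-> F(x * (t,0,0)) at t = 0;
   indeed X_1 = d1 - x2 d3. *)
Definition hasX1 (F : Hpt -> R * R) (x : Hpt) (l : R * R) : Prop :=
  vderiv_lim (fun t => F (hmul x (mkH t 0 0))) 0 l.

(* X_2 F (x) = l : derivative of t |-> F(x * (0,t,0)) at t = 0;
   indeed X_2 = d2 + x1 d3. *)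
Definition hasX2 (F : Hpt -> R * R) (x : Hpt) (l : R * R) : Prop :=
  vderiv_lim (fun t => F (hmul x (mkH 0 t 0))) 0 l.

(* Horizontal gradient nabla_h F = [X1F | X2F] (2x2 matrix whose columns are
   DF1 x = X1 F(x) and DF2 x = X2 F(x)); its norm: max of entries. *)
Definition mat_norm (a b : R * R) : R :=
  Rmax (Rmax (Rabs (fst a)) (Rabs (snd a))) (Rmax (Rabs (fst b)) (Rabs (snd b))).

Definition vsub (u v : R * R) : R * R := (fst u - fst v, snd u - snd v).

(* alpha-Hoelder continuity of nabla_h F w.r.t. d on bounded sets
   (every bounded set is contained in some ball B(0,R0)). *)
Definition hoelder_on_bounded (d : Hpt -> Hpt -> R) (alpha : R)
  (DF1 DF2 : Hpt -> R * R) : Prop :=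
  forall R0, 0 < R0 -> exists C, forall x y,
    d h0 x < R0 -> d h0 y < R0 -> x <> y ->
    mat_norm (vsub (DF1 x) (DF1 y)) (vsub (DF2 x) (DF2 y))
      <= C * Rpower (d x y) alpha.

Definition C1alpha_h (d : Hpt -> Hpt -> R) (alpha : R) (F : Hpt -> R * R)
  (DF1 DF2 : Hpt -> R * R) : Prop :=
  (forall x, hasX1 F x (DF1 x)) /\ (forall x, hasX2 F x (DF2 x)) /\
  hoelder_on_bounded d alpha DF1 DF2.

Definition hdet (a b : R * R) : R := fst a * snd b - fst b * snd a.

Definition linL (a b : R * R) (q : Hpt) : R * R :=
  (hx1 q * fst a + hx2 q * fst b, hx1 q * snd a + hx2 q * snd b).

Definition Fpr (F : Hpt -> R * R) (DF1 DF2 : Hpt -> R * R) (p : Hpt) (r : R)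
  (q : Hpt) : R * R :=
  if Req_EM_T r 0 then linL (DF1 p) (DF2 p) q
  else ((fst (F (hmul p (hdil r q))) - fst (F p)) / r,
        (snd (F (hmul p (hdil r q))) - snd (F p)) / r).

Definition dist2 (z w : R * R) : R :=
  sqrt ((fst z - fst w) ^ 2 + (snd z - snd w) ^ 2).

Definition open2 (U : R * R -> Prop) : Prop :=
  forall z, U z -> exists e, 0 < e /\ forall w, dist2 z w < e -> U w.

Definition compact2 (K : R * R -> Prop) : Prop :=
  forall (I : Type) (U : I -> R * R -> Prop),
    (forall i, open2 (U i)) ->
    (forall z, K z -> exists i, U i z) ->
    exists l : list I, forall z, K z -> exists i, In i l /\ U i z.

Definition image2 (G : Hpt -> R * R) (A : Hpt -> Prop) (z : R * R) : Prop :=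
  exists q, A q /\ G q = z.

(* Main.v *)
Require Import Defs.
From Stdlib Require Import Reals Lra List.
Open Scope R_scope.


Lemma Hpt_ext : forall x y : Hpt, hx1 x = hx1 y -> hx2 x = hx2 y -> hx3 x = hx3 y -> x = y.
Proof. intros [a b c] [a' b' c']; simpl; intros; subst; reflexivity. Qed.

Ltac hring := apply Hpt_ext; simpl; ring.

Lemma hmul_assoc x y z : hmul (hmul x y) z = hmul x (hmul y z).
Proof. hring. Qed.
Lemma hmul_h0_r x : hmul x h0 = x.
Proof. hring. Qed.
Lemma hmul_h0_l x : hmul h0 x = x.
Proof. hring. Qed.
Lemma hdil_h0 r : hdil r h0 = h0.
Proof. hring. Qed.
Lemma hdil_mul r x y : hdil r (hmul x y) = hmul (hdil r x) (hdil r y).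
Proof. hring. Qed.

Definition seg1 t := mkH t 0 0.
Definition seg2 t := mkH 0 t 0.


Definition nrm (d : Hpt -> Hpt -> R) y := d h0 y.

Lemma d_refl d : is_homog_dist d -> forall x, d x x = 0.
Proof. intros (_&H&_) x. apply H. reflexivity. Qed.
Lemma d_sym d : is_homog_dist d -> forall x y, d x y = d y x.
Proof. intros (_&_&H&_); auto. Qed.
Lemma d_tri d : is_homog_dist d -> forall x y z, d x z <= d x y + d y z.
Proof. intros (_&_&_&H&_); auto. Qed.
Lemma d_left d : is_homog_dist d -> forall z x y, d (hmul z x) (hmul z y) = d x y.
Proof. intros (_&_&_&_&H&_); auto. Qed.
Lemma d_hom d : is_homog_dist d -> forall r x y, 0 < r -> d (hdil r x) (hdil r y) = r * d x y.
Proof. intros (_&_&_&_&_&H); auto. Qed.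
Lemma d_pos d : is_homog_dist d -> forall x y, 0 <= d x y.
Proof. intros (H&_); auto. Qed.

Lemma nrm_mul d : is_homog_dist d -> forall y z, nrm d (hmul y z) <= nrm d y + nrm d z.
Proof.
  intros Hd y z; unfold nrm.
  eapply Rle_trans. apply (d_tri d Hd h0 y).
  rewrite <- (hmul_h0_r y) at 2. rewrite (d_left d Hd). lra.
Qed.

Lemma d_p_dil d : is_homog_dist d -> forall p r y, 0 < r -> d p (hmul p (hdil r y)) = r * nrm d y.
Proof.
  intros Hd p r y Hr. rewrite <- (hmul_h0_r p) at 1. rewrite d_left by auto.
  rewrite <- (hdil_h0 r). rewrite d_hom; auto.
Qed.

Lemma nrm_segg d (seg : R -> Hpt) : is_homog_dist d ->
  (forall a b, hmul (seg a) (seg b) = seg (a+b)) ->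
  (forall r t, hdil r (seg t) = seg (r*t)) -> seg 0 = h0 ->
  forall t, nrm d (seg t) = Rabs t * nrm d (seg 1).
Proof.
  intros Hd Hadd Hdil H0 t. unfold nrm.
  destruct (Rtotal_order t 0) as [Hn|[Hz|Hp]].
  - rewrite Rabs_left by lra.
    assert (E : d h0 (seg t) = d h0 (seg (-t))).
    { rewrite <- (d_left d Hd (seg (-t))). rewrite hmul_h0_r, Hadd.
      replace (-t + t) with 0 by ring. rewrite H0, d_sym by auto. reflexivity. }
    rewrite E. rewrite <- (hdil_h0 (-t)) at 1. replace (seg (-t)) with (hdil (-t) (seg 1)).
    rewrite d_hom by (auto; lra). reflexivity. rewrite Hdil; f_equal; ring.
  - subst. rewrite H0, d_refl by auto. rewrite Rabs_R0; ring.
  - rewrite Rabs_right by lra.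
    rewrite <- (hdil_h0 t) at 1. replace (seg t) with (hdil t (seg 1)).
    rewrite d_hom by (auto; lra). reflexivity. rewrite Hdil; f_equal; ring.
Qed.

Lemma nrm_seg1 d : is_homog_dist d -> forall t, nrm d (seg1 t) = Rabs t * nrm d (seg1 1).
Proof. intros Hd; apply nrm_segg; auto; intros; unfold seg1, hmul, hdil; simpl; try hring. Qed.
Lemma nrm_seg2 d : is_homog_dist d -> forall t, nrm d (seg2 t) = Rabs t * nrm d (seg2 1).
Proof. intros Hd; apply nrm_segg; auto; intros; unfold seg2, hmul, hdil; simpl; try hring. Qed.

Lemma Hpt_eq_dec (x y : Hpt) : x = y \/ x <> y.
Proof.
  destruct (Req_dec (hx1 x) (hx1 y)); [|right; intros ->; auto].
  destruct (Req_dec (hx2 x) (hx2 y)); [|right; intros ->; auto].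
  destruct (Req_dec (hx3 x) (hx3 y)); [|right; intros ->; auto].
  left; apply Hpt_ext; auto.
Qed.


Definition lam (l u : R * R) := fst l * fst u + snd l * snd u.
Definition nl (l : R * R) := Rabs (fst l) + Rabs (snd l).
Definition gr (F : Hpt -> R * R) p r z :=
  ((fst (F (hmul p (hdil r z))) - fst (F p)) / r, (snd (F (hmul p (hdil r z))) - snd (F p)) / r).

Lemma lam_gr F p r z l : r <> 0 ->
  lam l (gr F p r z) = (lam l (F (hmul p (hdil r z))) - lam l (F p)) / r.
Proof. intros; unfold lam, gr; simpl; field; auto. Qed.

Lemma dlim_lin a b f g x la lb : derivable_pt_lim f x la -> derivable_pt_lim g x lb ->
  derivable_pt_lim (fun s => a * f s + b * g s) x (a*la + b*lb).
Proof.
  intros H1 H2.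
  exact (derivable_pt_lim_plus _ _ x _ _ (derivable_pt_lim_scal f a x la H1)
           (derivable_pt_lim_scal g b x lb H2)).
Qed.

Lemma dlim_shift f g t L : (forall s, g s = f (t+s)) -> derivable_pt_lim g 0 L ->
  derivable_pt_lim f t L.
Proof.
  intros Hg H eps He. destruct (H eps He) as [del Hd]. exists del.
  intros h Hh Hlt. specialize (Hd h Hh Hlt). rewrite !Hg in Hd.
  rewrite Rplus_0_l, Rplus_0_r in Hd. exact Hd.
Qed.

Lemma mvt_bound f f' K B X : (forall t, derivable_pt_lim f t (f' t)) ->
  (forall t, Rabs t <= Rabs X -> Rabs (f' t - K) <= B) ->
  Rabs (f X - f 0 - K * X) <= B * Rabs X.
Proof.
  intros Hd Hb.
  destruct (Rtotal_order X 0) as [Hn|[Hz|Hp]].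
  - destruct (MVT_cor2 f f' X 0 Hn (fun c _ => Hd c)) as [c [Hc Hc2]].
    replace (f X - f 0 - K * X) with (- (f 0 - f X) + K * (0 - X)) by ring.
    rewrite Hc. replace (- (f' c * (0 - X)) + K * (0 - X)) with ((f' c - K) * X) by ring.
    rewrite Rabs_mult. apply Rmult_le_compat_r. apply Rabs_pos.
    apply Hb. rewrite !Rabs_left by lra. lra.
  - subst. replace (f 0 - f 0 - K * 0) with 0 by ring. rewrite Rabs_R0, Rmult_0_r. lra.
  - destruct (MVT_cor2 f f' 0 X Hp (fun c _ => Hd c)) as [c [Hc Hc2]].
    replace (f X - f 0 - K * X) with ((f X - f 0) - K * (X - 0)) by ring.
    rewrite Hc. replace (f' c * (X - 0) - K * (X - 0)) with ((f' c - K) * X) by ring.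
    rewrite Rabs_mult. apply Rmult_le_compat_r. apply Rabs_pos.
    apply Hb. rewrite !Rabs_right by lra. lra.
Qed.

Lemma seg_gen d F (DF : Hpt -> R*R) (seg : R -> Hpt) p r th Rz cm l z c :
 (forall x, vderiv_lim (fun t => F (hmul x (seg t))) 0 (DF x)) ->
 (forall a b, hmul (seg a) (seg b) = seg (a+b)) ->
 (forall r t, hdil r (seg t) = seg (r*t)) -> seg 0 = h0 ->
 is_homog_dist d ->
 (forall t, nrm d (seg t) <= Rabs t * cm) ->
 0 < r ->
 (forall y, nrm d y <= Rz -> Rabs (lam l (DF (hmul p (hdil r y))) - lam l (DF p)) <= th) ->
 nrm d z + Rabs c * cm <= Rz ->
 Rabs (lam l (gr F p r (hmul z (seg c))) - lam l (gr F p r z) - c * lam l (DF p)) <= th * Rabs c.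
Proof.
  intros HX Hadd Hdil H0 Hd Hseg Hr Hgood Hz.
  assert (Hcm : 0 <= cm).
  { pose proof (Hseg 1). pose proof (d_pos d Hd h0 (seg 1)). unfold nrm in *.
    rewrite Rabs_R1 in H. lra. }
  set (x := hmul p (hdil r z)).
  set (f := fun t => lam l (F (hmul x (seg t)))).
  set (f' := fun t => lam l (DF (hmul x (seg t)))).
  assert (Hder : forall t, derivable_pt_lim f t (f' t)).
  { intros t. apply (dlim_shift f (fun s => lam l (F (hmul (hmul x (seg t)) (seg s))))).
    - intros s. unfold f. rewrite hmul_assoc, Hadd. reflexivity.
    - destruct (HX (hmul x (seg t))) as [A B]. unfold f', lam. apply dlim_lin; auto. }
  assert (Hpt : forall t, hmul x (seg t) = hmul p (hdil r (hmul z (seg (t / r))))).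
  { intros t. unfold x. rewrite hdil_mul, Hdil, hmul_assoc. f_equal. f_equal. f_equal. field. lra. }
  pose proof (mvt_bound f f' (lam l (DF p)) th (r * c) Hder) as M.
  assert (Hb : forall t, Rabs t <= Rabs (r * c) -> Rabs (f' t - lam l (DF p)) <= th).
  { intros t Ht. unfold f'. rewrite Hpt. apply Hgood.
    eapply Rle_trans. apply nrm_mul; auto.
    eapply Rle_trans; [| exact Hz]. apply Rplus_le_compat_l.
    eapply Rle_trans. apply Hseg. apply Rmult_le_compat_r; auto.
    unfold Rdiv. rewrite Rabs_mult, Rabs_inv, (Rabs_right r) by lra.
    rewrite Rabs_mult, (Rabs_right r) in Ht by lra.
    apply (Rmult_le_reg_l r); auto. field_simplify; lra. }
  specialize (M Hb).
  rewrite !lam_gr by lra.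
  replace (hmul p (hdil r (hmul z (seg c)))) with (hmul x (seg (r * c))).
  2:{ rewrite Hpt. do 4 f_equal. field. lra. }
  replace (lam l (F (hmul x (seg (r * c)))) ) with (f (r*c)) by reflexivity.
  replace (lam l (F (hmul p (hdil r z)))) with (f 0).
  2:{ unfold f. rewrite H0, hmul_h0_r. reflexivity. }
  replace ((f (r * c) - lam l (F p)) / r - (f 0 - lam l (F p)) / r - c * lam l (DF p))
    with ((f (r*c) - f 0 - lam l (DF p) * (r*c)) / r) by (field; lra).
  unfold Rdiv. rewrite Rabs_mult, Rabs_inv, (Rabs_right r) by lra.
  rewrite Rabs_mult, (Rabs_right r) in M by lra.
  apply (Rmult_le_reg_l r); auto. field_simplify; try lra.
Qed.


Definition segb (b : bool) t := if b then seg1 t else seg2 t.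
Definition wprod (w : list (bool * R)) : Hpt :=
  fold_right (fun (bc : bool * R) (acc : _) => hmul (segb (fst bc) (snd bc)) acc) h0 w.
Definition wlen (w : list (bool * R)) : R :=
  fold_right (fun (bc : bool * R) (acc : _) => Rabs (snd bc) + acc) 0 w.
Definition wlin (DF1 DF2 : Hpt -> R * R) p l (w : list (bool * R)) : R :=
  fold_right (fun (bc : bool * R) (acc : _) => snd bc * lam l (if fst bc then DF1 p else DF2 p) + acc) 0 w.

Lemma wlen_nonneg w : 0 <= wlen w.
Proof. induction w as [|[b c] w IH]; simpl; [lra|]. pose proof (Rabs_pos c); lra. Qed.

Lemma nrm_wprod d : is_homog_dist d -> forall cm, nrm d (seg1 1) <= cm -> nrm d (seg2 1) <= cm ->
  forall w z, nrm d (hmul z (wprod w)) <= nrm d z + wlen w * cm.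
Proof.
  intros Hd cm H1 H2 w. induction w as [|[b c] w IH]; intros z; simpl.
  - rewrite hmul_h0_r. lra.
  - rewrite <- hmul_assoc. eapply Rle_trans. apply IH.
    assert (nrm d (hmul z (segb b c)) <= nrm d z + Rabs c * cm).
    { eapply Rle_trans. apply nrm_mul; auto. apply Rplus_le_compat_l.
      destruct b; simpl; [rewrite nrm_seg1 by auto|rewrite nrm_seg2 by auto];
      apply Rmult_le_compat_l; auto; apply Rabs_pos. }
    lra.
Qed.

Lemma word_gen d F DF1 DF2 p r th Rz cm l :
  is_homog_dist d ->
  (forall x, hasX1 F x (DF1 x)) -> (forall x, hasX2 F x (DF2 x)) ->
  nrm d (seg1 1) <= cm -> nrm d (seg2 1) <= cm -> 0 < r ->
  (forall y, nrm d y <= Rz -> Rabs (lam l (DF1 (hmul p (hdil r y))) - lam l (DF1 p)) <= th) ->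
  (forall y, nrm d y <= Rz -> Rabs (lam l (DF2 (hmul p (hdil r y))) - lam l (DF2 p)) <= th) ->
  forall w z, nrm d z + wlen w * cm <= Rz ->
  Rabs (lam l (gr F p r (hmul z (wprod w))) - lam l (gr F p r z) - wlin DF1 DF2 p l w)
    <= th * wlen w.
Proof.
  intros Hd HX1 HX2 Hc1 Hc2 Hr G1 G2 w.
  induction w as [|[b c] w IH]; intros z Hz.
  - simpl. rewrite hmul_h0_r. replace (lam l (gr F p r z) - lam l (gr F p r z) - 0) with 0 by ring.
    rewrite Rabs_R0. lra.
  - change (wlen ((b,c)::w)) with (Rabs c + wlen w) in *.
    change (wprod ((b,c)::w)) with (hmul (segb b c) (wprod w)).
    change (wlin DF1 DF2 p l ((b,c)::w)) with (c * lam l (if b then DF1 p else DF2 p) + wlin DF1 DF2 p l w).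
    rewrite <- hmul_assoc.
    pose proof (wlen_nonneg w).
    assert (Hcm : 0 <= cm). { pose proof (d_pos d Hd h0 (seg1 1)). unfold nrm in *. lra. }
    assert (S : Rabs (lam l (gr F p r (hmul z (segb b c))) - lam l (gr F p r z)
                 - c * lam l (if b then DF1 p else DF2 p)) <= th * Rabs c).
    { destruct b; simpl.
      - apply (seg_gen d F DF1 seg1 p r th Rz cm l z c); auto.
        + intros; unfold seg1; hring.
        + intros; unfold seg1; hring.
        + intros t; rewrite nrm_seg1 by auto; apply Rmult_le_compat_l; auto; apply Rabs_pos.
        + pose proof (Rabs_pos c). nra.
      - apply (seg_gen d F DF2 seg2 p r th Rz cm l z c); auto.
        + intros; unfold seg2; hring.
        + intros; unfold seg2; hring.
        + intros t; rewrite nrm_seg2 by auto; apply Rmult_le_compat_l; auto; apply Rabs_pos.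
        + pose proof (Rabs_pos c). nra. }
    assert (Hz' : nrm d (hmul z (segb b c)) + wlen w * cm <= Rz).
    { pose proof (nrm_wprod d Hd cm Hc1 Hc2 ((b,c)::nil) z) as N. simpl in N.
      rewrite hmul_h0_r in N. nra. }
    specialize (IH _ Hz').
    set (A := lam l (gr F p r (hmul (hmul z (segb b c)) (wprod w)))) in *.
    set (B := lam l (gr F p r (hmul z (segb b c)))) in *.
    set (C := lam l (gr F p r z)) in *.
    set (W := wlin DF1 DF2 p l w) in *.
    set (V := c * lam l (if b then DF1 p else DF2 p)) in *.
    replace (A - C - (V + W)) with ((A - B - W) + (B - C - V)) by ring.
    eapply Rle_trans. apply Rabs_triang. lra.
Qed.

Lemma lam_sub_bound l u v : Rabs (lam l u - lam l v) <= nl l * Rmax (Rabs (fst u - fst v)) (Rabs (snd u - snd v)).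
Proof.
  unfold lam, nl.
  replace (fst l * fst u + snd l * snd u - (fst l * fst v + snd l * snd v))
    with (fst l * (fst u - fst v) + snd l * (snd u - snd v)) by ring.
  eapply Rle_trans. apply Rabs_triang. rewrite !Rabs_mult.
  pose proof (Rmax_l (Rabs (fst u - fst v)) (Rabs (snd u - snd v))).
  pose proof (Rmax_r (Rabs (fst u - fst v)) (Rabs (snd u - snd v))).
  pose proof (Rabs_pos (fst l)). pose proof (Rabs_pos (snd l)). nra.
Qed.

Lemma mat_norm_1 a b : Rmax (Rabs (fst a)) (Rabs (snd a)) <= mat_norm a b.
Proof. unfold mat_norm. apply Rmax_l. Qed.
Lemma mat_norm_2 a b : Rmax (Rabs (fst b)) (Rabs (snd b)) <= mat_norm a b.
Proof. unfold mat_norm. apply Rmax_r. Qed.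

Definition vword (T : R) : list (bool * R) :=
  let s := sqrt (Rabs T) in let s' := T / (2 * s) in
  (true, s) :: (false, s') :: (true, - s) :: (false, - s') :: nil.

Lemma sqrt_abs_sq T : sqrt (Rabs T) * sqrt (Rabs T) = Rabs T.
Proof. apply sqrt_sqrt, Rabs_pos. Qed.

Lemma vword_prod T : wprod (vword T) = mkH 0 0 T.
Proof.
  unfold vword, wprod, segb, seg1, seg2; simpl.
  apply Hpt_ext; simpl; try ring.
  destruct (Req_dec T 0) as [->|HT].
  - rewrite Rabs_R0, sqrt_0. unfold Rdiv. rewrite ?Rmult_0_r, ?Rinv_0. ring.
  - assert (0 < sqrt (Rabs T)) by (apply sqrt_lt_R0; apply Rabs_pos_lt; auto).
    field. lra.
Qed.

Lemma vword_lin DF1 DF2 p l T : wlin DF1 DF2 p l (vword T) = 0.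
Proof. unfold vword, wlin; simpl; ring. Qed.

Lemma vword_len T : wlen (vword T) = 3 * sqrt (Rabs T).
Proof.
  unfold vword, wlen; simpl. rewrite !Rabs_Ropp.
  pose proof (sqrt_pos (Rabs T)).
  destruct (Req_dec T 0) as [->|HT].
  - rewrite Rabs_R0, sqrt_0. unfold Rdiv. rewrite Rmult_0_r, Rinv_0, Rmult_0_l, Rabs_R0. ring.
  - assert (0 < sqrt (Rabs T)) by (apply sqrt_lt_R0; apply Rabs_pos_lt; auto).
    unfold Rdiv. rewrite Rabs_mult, Rabs_inv, (Rabs_right (2 * _)) by lra.
    rewrite (Rabs_right (sqrt _)) by lra.
    assert (E : Rabs T * / (2 * sqrt (Rabs T)) = sqrt (Rabs T) / 2).
    { rewrite <- (sqrt_abs_sq T) at 1. field. lra. }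
    rewrite E. lra.
Qed.


Definition Phi F p r q0 a b := gr F p r (hmul q0 (wprod ((true,a)::(false,b)::nil))).
Definition w0 (q0 : Hpt) : list (bool * R) :=
  (true, hx1 q0) :: (false, hx2 q0) :: vword (hx3 q0 - hx1 q0 * hx2 q0).

Lemma w0_prod q0 : wprod (w0 q0) = q0.
Proof.
  change (wprod (w0 q0)) with (hmul (seg1 (hx1 q0)) (hmul (seg2 (hx2 q0)) (wprod (vword (hx3 q0 - hx1 q0 * hx2 q0))))).
  rewrite vword_prod. unfold seg1, seg2. hring.
Qed.

Lemma w0_len q0 : wlen (w0 q0) = Rabs (hx1 q0) + (Rabs (hx2 q0) + 3 * sqrt (Rabs (hx3 q0 - hx1 q0 * hx2 q0))).
Proof.
  change (wlen (w0 q0)) with (Rabs (hx1 q0) + (Rabs (hx2 q0) + wlen (vword (hx3 q0 - hx1 q0 * hx2 q0)))).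
  rewrite vword_len. reflexivity.
Qed.

Lemma w0_lin DF1 DF2 p l q0 : wlin DF1 DF2 p l (w0 q0) = hx1 q0 * lam l (DF1 p) + (hx2 q0 * lam l (DF2 p) + 0).
Proof.
  change (wlin DF1 DF2 p l (w0 q0)) with (hx1 q0 * lam l (DF1 p) + (hx2 q0 * lam l (DF2 p) + wlin DF1 DF2 p l (vword (hx3 q0 - hx1 q0 * hx2 q0)))).
  rewrite vword_lin. reflexivity.
Qed.

Lemma gr_h0 F p r : gr F p r h0 = (0, 0).
Proof. unfold gr. rewrite hdil_h0, hmul_h0_r. unfold Rdiv. f_equal; ring. Qed.

Lemma sqrt_le_mono x y : 0 <= x <= y -> sqrt x <= sqrt y.
Proof. intros; apply sqrt_le_1_alt; lra. Qed.


Lemma est_all d F DF1 DF2 p r thl Rz cm l q0 :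
  is_homog_dist d ->
  (forall x, hasX1 F x (DF1 x)) -> (forall x, hasX2 F x (DF2 x)) ->
  nrm d (seg1 1) <= cm -> nrm d (seg2 1) <= cm -> 0 < r ->
  (forall y, nrm d y <= Rz -> Rabs (lam l (DF1 (hmul p (hdil r y))) - lam l (DF1 p)) <= thl) ->
  (forall y, nrm d y <= Rz -> Rabs (lam l (DF2 (hmul p (hdil r y))) - lam l (DF2 p)) <= thl) ->
  nrm d q0 + (wlen (w0 q0) + 10) * cm <= Rz ->
  (forall a b, Rabs a <= 1 -> Rabs b <= 1 ->
    Rabs (lam l (Phi F p r q0 a b) - ((hx1 q0 + a) * lam l (DF1 p) + (hx2 q0 + b) * lam l (DF2 p)))
      <= thl * (wlen (w0 q0) + Rabs a + Rabs b)) /\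
  (forall a b b', Rabs a <= 1 -> Rabs b <= 1 -> Rabs b' <= 1 ->
    Rabs (lam l (Phi F p r q0 a b') - lam l (Phi F p r q0 a b) - (b' - b) * lam l (DF2 p))
      <= thl * Rabs (b' - b)) /\
  (forall a a' b, Rabs a <= 1 -> Rabs a' <= 1 -> Rabs b <= 1 ->
    Rabs (lam l (Phi F p r q0 a' b) - lam l (Phi F p r q0 a b) - (a' - a) * lam l (DF1 p))
      <= thl * (Rabs (a' - a) + 3 * sqrt (Rabs (2 * b * (a' - a))))).
Proof.
  intros Hd HX1 HX2 Hc1 Hc2 Hr G1 G2 HRz.
  pose proof (word_gen d F DF1 DF2 p r thl Rz cm l Hd HX1 HX2 Hc1 Hc2 Hr G1 G2) as W.
  assert (Hcm : 0 <= cm). { pose proof (d_pos d Hd h0 (seg1 1)). unfold nrm in *. lra. }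
  pose proof (wlen_nonneg (w0 q0)) as HL.
  assert (Hq0 : 0 <= nrm d q0) by (apply d_pos; auto).
  assert (NQ : forall a b, nrm d (hmul q0 (wprod ((true,a)::(false,b)::nil))) <= nrm d q0 + (Rabs a + Rabs b) * cm).
  { intros a b. eapply Rle_trans. apply (nrm_wprod d Hd cm Hc1 Hc2). simpl. lra. }
  split; [|split].
  - intros a b Ha Hb.
    pose proof (W (w0 q0) h0) as W1. rewrite hmul_h0_l, w0_prod, gr_h0 in W1.
    unfold nrm at 1 in W1. rewrite d_refl in W1 by auto.
    assert (W1' : Rabs (lam l (gr F p r q0) - lam l (0,0) - wlin DF1 DF2 p l (w0 q0)) <= thl * wlen (w0 q0)).
    { apply W1. nra. }
    rewrite w0_lin in W1'.
    pose proof (W ((true,a)::(false,b)::nil) q0) as W2.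
    change (wlen ((true,a)::(false,b)::nil)) with (Rabs a + (Rabs b + 0)) in W2.
    change (wlin DF1 DF2 p l ((true,a)::(false,b)::nil)) with (a * lam l (DF1 p) + (b * lam l (DF2 p) + 0)) in W2.
    assert (W2' : Rabs (lam l (gr F p r (hmul q0 (wprod ((true, a) :: (false, b) :: nil)))) -
      lam l (gr F p r q0) - (a * lam l (DF1 p) + (b * lam l (DF2 p) + 0))) <= thl * (Rabs a + (Rabs b + 0))).
    { apply W2. nra. }
    unfold Phi.
    set (X := lam l (gr F p r (hmul q0 (wprod ((true, a) :: (false, b) :: nil))))) in *.
    set (Y := lam l (gr F p r q0)) in *.
    match goal with |- Rabs ?e <= _ => replace e with
      ((X - Y - (a * lam l (DF1 p) + (b * lam l (DF2 p) + 0))) +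
       (Y - lam l (0,0) - (hx1 q0 * lam l (DF1 p) + (hx2 q0 * lam l (DF2 p) + 0)))) by (unfold lam; simpl; ring) end.
    eapply Rle_trans. apply Rabs_triang. lra.
  - intros a b b' Ha Hb Hb'.
    pose proof (W ((false, b' - b)::nil) (hmul q0 (wprod ((true,a)::(false,b)::nil)))) as W3.
    change (wlen ((false, b' - b)::nil)) with (Rabs (b' - b) + 0) in W3.
    change (wlin DF1 DF2 p l ((false, b' - b)::nil)) with ((b' - b) * lam l (DF2 p) + 0) in W3.
    replace (hmul (hmul q0 (wprod ((true, a) :: (false, b) :: nil))) (wprod ((false, b' - b) :: nil)))
      with (hmul q0 (wprod ((true,a)::(false,b')::nil))) in W3
      by (unfold wprod, segb, seg1, seg2; simpl; hring).
    unfold Phi. rewrite !Rplus_0_r in W3. apply W3.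
    pose proof (NQ a b). pose proof (Rabs_triang b' (-b)). rewrite Rabs_Ropp in H0.
    unfold Rminus. nra.
  - intros a a' b Ha Ha' Hb.
    set (c := a' - a).
    pose proof (W ((true, c) :: vword (2 * b * c)) (hmul q0 (wprod ((true,a)::(false,b)::nil)))) as W4.
    change (wlen ((true, c) :: vword (2 * b * c))) with (Rabs c + wlen (vword (2 * b * c))) in W4.
    change (wlin DF1 DF2 p l ((true, c) :: vword (2 * b * c))) with (c * lam l (DF1 p) + wlin DF1 DF2 p l (vword (2 * b * c))) in W4.
    rewrite vword_len, vword_lin, Rplus_0_r in W4.
    replace (hmul (hmul q0 (wprod ((true, a) :: (false, b) :: nil))) (wprod ((true, c) :: vword (2 * b * c))))
      with (hmul q0 (wprod ((true,a')::(false,b)::nil))) in W4.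
    2:{ change (wprod ((true, c) :: vword (2 * b * c))) with (hmul (seg1 c) (wprod (vword (2 * b * c)))).
        rewrite vword_prod. unfold c, wprod, segb, seg1, seg2; simpl; hring. }
    unfold Phi. apply W4.
    pose proof (NQ a b).
    assert (Hc : Rabs c <= 2). { unfold c. pose proof (Rabs_triang a' (-a)). rewrite Rabs_Ropp in H0. unfold Rminus. lra. }
    assert (Hs : sqrt (Rabs (2 * b * c)) <= 2).
    { replace 2 with (sqrt (2 * 2)) at 2 by (rewrite sqrt_square; lra).
      apply sqrt_le_mono. split. apply Rabs_pos. rewrite !Rabs_mult, (Rabs_right 2) by lra.
      pose proof (Rabs_pos b). pose proof (Rabs_pos c). nra. }
    nra.
Qed.


Definition clamp s a := Rmax (- s) (Rmin s a).

Lemma clamp_bound s a : 0 <= s -> Rabs (clamp s a) <= s.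
Proof.
  intros; unfold clamp. apply Rabs_le.
  destruct (Rle_dec s a); [rewrite Rmin_left by lra|rewrite Rmin_right by lra];
  [rewrite Rmax_right by lra; lra|].
  destruct (Rle_dec (-s) a); [rewrite Rmax_right by lra|rewrite Rmax_left by lra]; lra.
Qed.

Lemma clamp_id s a : -s <= a <= s -> clamp s a = a.
Proof. intros; unfold clamp. rewrite Rmin_right by lra. rewrite Rmax_right by lra. reflexivity. Qed.

Lemma clamp_lip s a b : 0 <= s -> Rabs (clamp s a - clamp s b) <= Rabs (a - b).
Proof.
  intros Hs. unfold clamp.
  destruct (Rle_dec s a); [rewrite (Rmin_left s a) by lra|rewrite (Rmin_right s a) by lra];
  destruct (Rle_dec s b); [rewrite (Rmin_left s b) by lra|rewrite (Rmin_right s b) by lra|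
    rewrite (Rmin_left s b) by lra|rewrite (Rmin_right s b) by lra];
  try (destruct (Rle_dec (-s) a); [rewrite (Rmax_right (-s) a) by lra|rewrite (Rmax_left (-s) a) by lra]);
  try (destruct (Rle_dec (-s) b); [rewrite (Rmax_right (-s) b) by lra|rewrite (Rmax_left (-s) b) by lra]);
  try rewrite (Rmax_right (-s) s) by lra;
  apply Rabs_le; apply Rabs_def2b_abs_fake || (unfold Rabs; destruct (Rcase_abs (a - b)); lra).
Qed.

Lemma le_sqrt_small t : 0 <= t <= 1 -> t <= sqrt t.
Proof.
  intros Ht. pose proof (sqrt_pos t). assert (sqrt t <= 1).
  { rewrite <- sqrt_1. apply sqrt_le_1_alt. lra. }
  rewrite <- (sqrt_sqrt t) at 1 by lra. nra.
Qed.

Lemma cont_mod f N : 0 <= N ->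
  (forall x y, Rabs (f x - f y) <= N * (Rabs (x - y) + sqrt (Rabs (x - y)))) -> continuity f.
Proof.
  intros HN Hf x eps He.
  set (e' := eps / (2 * N + 2)).
  assert (He' : 0 < e') by (unfold e'; apply Rdiv_lt_0_compat; lra).
  exists (Rmin 1 (e' * e')). split. apply Rmin_glb_lt; nra.
  intros y [_ Hy]. unfold R_dist in *. simpl in *. unfold R_dist in *.
  pose proof (Rmin_l 1 (e' * e')). pose proof (Rmin_r 1 (e' * e')).
  set (t := Rabs (y - x)) in *.
  assert (Ht : 0 <= t) by apply Rabs_pos.
  assert (S1 : t <= sqrt t) by (apply le_sqrt_small; lra).
  assert (S2 : sqrt t < e').
  { rewrite <- (sqrt_square e') by lra. apply sqrt_lt_1_alt. lra. }
  eapply Rle_lt_trans. apply Hf. fold t.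
  assert (N * (t + sqrt t) <= 2 * N * e') by nra.
  assert (2 * N * e' < eps).
  { unfold e'. apply (Rmult_lt_reg_r (2*N+2)). lra. field_simplify; lra. }
  lra.
Qed.

Lemma abs_betw x B : Rabs x <= B -> -B <= x <= B.
Proof. unfold Rabs; destruct (Rcase_abs x); intros; lra. Qed.

Definition kk (v1 v2 : R * R) := (snd v2 / hdet v1 v2, - fst v2 / hdet v1 v2).
Definition ll (v1 v2 : R * R) := (- snd v1 / hdet v1 v2, fst v1 / hdet v1 v2).

Lemma kk_v1 v1 v2 : hdet v1 v2 <> 0 -> lam (kk v1 v2) v1 = 1.
Proof. intros H; unfold lam, kk, hdet in *; simpl; field; auto. Qed.
Lemma kk_v2 v1 v2 : hdet v1 v2 <> 0 -> lam (kk v1 v2) v2 = 0.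
Proof. intros H; unfold lam, kk, hdet in *; simpl; field; auto. Qed.
Lemma ll_v1 v1 v2 : hdet v1 v2 <> 0 -> lam (ll v1 v2) v1 = 0.
Proof. intros H; unfold lam, ll, hdet in *; simpl; field; auto. Qed.
Lemma ll_v2 v1 v2 : hdet v1 v2 <> 0 -> lam (ll v1 v2) v2 = 1.
Proof. intros H; unfold lam, ll, hdet in *; simpl; field; auto. Qed.

Lemma lam_inj v1 v2 u u' : hdet v1 v2 <> 0 ->
  lam (kk v1 v2) u = lam (kk v1 v2) u' -> lam (ll v1 v2) u = lam (ll v1 v2) u' -> u = u'.
Proof.
  intros H E1 E2. destruct u as [u1 u2], u' as [u1' u2'].
  unfold lam, kk, ll, hdet in *; simpl in *.
  assert (E1' : (snd v2 * (u1 - u1') - fst v2 * (u2 - u2')) / (fst v1 * snd v2 - fst v2 * snd v1) = 0).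
  { field_simplify; auto. field_simplify in E1; auto. unfold Rdiv in *. nra. }
  assert (E2' : (- snd v1 * (u1 - u1') + fst v1 * (u2 - u2')) / (fst v1 * snd v2 - fst v2 * snd v1) = 0).
  { field_simplify; auto. field_simplify in E2; auto. unfold Rdiv in *. nra. }
  assert (A : u1 - u1' = fst v1 * ((snd v2 * (u1 - u1') - fst v2 * (u2 - u2')) / (fst v1 * snd v2 - fst v2 * snd v1))
       + fst v2 * ((- snd v1 * (u1 - u1') + fst v1 * (u2 - u2')) / (fst v1 * snd v2 - fst v2 * snd v1)))
    by (field; auto).
  assert (B : u2 - u2' = snd v1 * ((snd v2 * (u1 - u1') - fst v2 * (u2 - u2')) / (fst v1 * snd v2 - fst v2 * snd v1))
       + snd v2 * ((- snd v1 * (u1 - u1') + fst v1 * (u2 - u2')) / (fst v1 * snd v2 - fst v2 * snd v1)))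
    by (field; auto).
  rewrite E1', E2' in A, B. f_equal; lra.
Qed.

Lemma kk_linL v1 v2 q : hdet v1 v2 <> 0 -> lam (kk v1 v2) (linL v1 v2 q) = hx1 q.
Proof. intros H; unfold lam, kk, linL, hdet in *; simpl; field; auto. Qed.
Lemma ll_linL v1 v2 q : hdet v1 v2 <> 0 -> lam (ll v1 v2) (linL v1 v2 q) = hx2 q.
Proof. intros H; unfold lam, ll, linL, hdet in *; simpl; field; auto. Qed.


Lemma good_lam d DF1 DF2 p r Rz th l :
  (forall y, nrm d y <= Rz -> mat_norm (vsub (DF1 (hmul p (hdil r y))) (DF1 p)) (vsub (DF2 (hmul p (hdil r y))) (DF2 p)) <= th) ->
  (forall y, nrm d y <= Rz -> Rabs (lam l (DF1 (hmul p (hdil r y))) - lam l (DF1 p)) <= nl l * th) /\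
  (forall y, nrm d y <= Rz -> Rabs (lam l (DF2 (hmul p (hdil r y))) - lam l (DF2 p)) <= nl l * th).
Proof.
  intros H. assert (0 <= nl l) by (unfold nl; pose proof (Rabs_pos (fst l)); pose proof (Rabs_pos (snd l)); lra).
  split; intros y Hy; specialize (H y Hy); eapply Rle_trans; try apply lam_sub_bound;
  apply Rmult_le_compat_l; auto; eapply Rle_trans.
  exact (mat_norm_1 (vsub (DF1 (hmul p (hdil r y))) (DF1 p)) (vsub (DF2 (hmul p (hdil r y))) (DF2 p))). exact H.
  exact (mat_norm_2 (vsub (DF1 (hmul p (hdil r y))) (DF1 p)) (vsub (DF2 (hmul p (hdil r y))) (DF2 p))). exact H.
Qed.

Lemma sqrt_2bc b c : Rabs b <= 1 -> sqrt (Rabs (2 * b * c)) <= 2 * sqrt (Rabs c).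
Proof.
  intros Hb. replace (2 * sqrt (Rabs c)) with (sqrt (4 * Rabs c)).
  - apply sqrt_le_mono. split. apply Rabs_pos. rewrite !Rabs_mult, (Rabs_right 2) by lra.
    pose proof (Rabs_pos c). pose proof (Rabs_pos b). nra.
  - rewrite sqrt_mult_alt by lra. replace 4 with (2*2) by ring. rewrite sqrt_square; lra.
Qed.

Lemma solve_pos d F DF1 DF2 p r q0 eps w cm th Rz sg :
  is_homog_dist d ->
  (forall x, hasX1 F x (DF1 x)) -> (forall x, hasX2 F x (DF2 x)) ->
  nrm d (seg1 1) <= cm -> nrm d (seg2 1) <= cm -> 0 < r ->
  hdet (DF1 p) (DF2 p) <> 0 ->
  (forall y, nrm d y <= Rz -> mat_norm (vsub (DF1 (hmul p (hdil r y))) (DF1 p)) (vsub (DF2 (hmul p (hdil r y))) (DF2 p)) <= th) ->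
  0 < sg <= 1 ->
  nrm d q0 + 2 * sg * cm < eps ->
  nrm d q0 + (wlen (w0 q0) + 10) * cm <= Rz ->
  0 <= th ->
  nl (ll (DF1 p) (DF2 p)) * th <= 1/2 ->
  nl (kk (DF1 p) (DF2 p)) * th * (wlen (w0 q0) + 2) <= sg / 4 ->
  nl (ll (DF1 p) (DF2 p)) * th * (wlen (w0 q0) + 2) <= sg / 4 ->
  Rabs (lam (kk (DF1 p) (DF2 p)) w - hx1 q0) <= sg / 4 ->
  Rabs (lam (ll (DF1 p) (DF2 p)) w - hx2 q0) <= sg / 4 ->
  exists q, d h0 q < eps /\ gr F p r q = w.
Proof.
  intros Hd HX1 HX2 Hc1 Hc2 Hr Hdet HG Hsg Heps HRz Hth Hth1 Hth2 Hth3 Hw1 Hw2.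
  set (K := kk (DF1 p) (DF2 p)) in *. set (L := ll (DF1 p) (DF2 p)) in *.
  set (tk := nl K * th). set (tl := nl L * th).
  assert (Htk : 0 <= tk) by (unfold tk, nl; pose proof (Rabs_pos (fst K)); pose proof (Rabs_pos (snd K)); nra).
  assert (Htl : 0 <= tl) by (unfold tl, nl; pose proof (Rabs_pos (fst L)); pose proof (Rabs_pos (snd L)); nra).
  set (Lam := wlen (w0 q0)). fold Lam in HRz, Hth2, Hth3.
  assert (HLam : 0 <= Lam) by apply wlen_nonneg.
  destruct (good_lam d DF1 DF2 p r Rz th K HG) as [GK1 GK2].
  destruct (good_lam d DF1 DF2 p r Rz th L HG) as [GL1 GL2].
  destruct (est_all d F DF1 DF2 p r tk Rz cm K q0 Hd HX1 HX2 Hc1 Hc2 Hr GK1 GK2 HRz) as [EK [BK AK]].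
  destruct (est_all d F DF1 DF2 p r tl Rz cm L q0 Hd HX1 HX2 Hc1 Hc2 Hr GL1 GL2 HRz) as [EL [BL AL]].
  assert (K1 : lam K (DF1 p) = 1) by (apply kk_v1; auto).
  assert (K2 : lam K (DF2 p) = 0) by (apply kk_v2; auto).
  assert (L1 : lam L (DF1 p) = 0) by (apply ll_v1; auto).
  assert (L2 : lam L (DF2 p) = 1) by (apply ll_v2; auto).
  fold Lam in EK, EL.
  set (P := Phi F p r q0) in *.
  set (x1 := hx1 q0) in *. set (x2 := hx2 q0) in *.
  assert (EK' : forall a b, Rabs a <= sg -> Rabs b <= sg -> x1 + a - sg/4 <= lam K (P a b) <= x1 + a + sg/4).
  { intros a b Ha Hb. pose proof (EK a b ltac:(lra) ltac:(lra)) as E. rewrite K1, K2 in E.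
    apply abs_betw in E. 
    assert (tk * (Lam + Rabs a + Rabs b) <= sg / 4).
    { pose proof (Rabs_pos a); pose proof (Rabs_pos b). unfold tk in *. nra. }
    lra. }
  assert (EL' : forall a b, Rabs a <= sg -> Rabs b <= sg -> x2 + b - sg/4 <= lam L (P a b) <= x2 + b + sg/4).
  { intros a b Ha Hb. pose proof (EL a b ltac:(lra) ltac:(lra)) as E. rewrite L1, L2 in E.
    apply abs_betw in E. 
    assert (tl * (Lam + Rabs a + Rabs b) <= sg / 4).
    { pose proof (Rabs_pos a); pose proof (Rabs_pos b). unfold tl in *. nra. }
    lra. }
  assert (BL' : forall a b b', Rabs a <= sg -> Rabs b <= sg -> Rabs b' <= sg ->
     Rabs (lam L (P a b') - lam L (P a b) - (b' - b)) <= Rabs (b' - b) / 2).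
  { intros a b b' Ha Hb Hb'. eapply Rle_trans. 
    replace ((b' - b)) with ((b' - b) * lam L (DF2 p)) at 1 by (rewrite L2; ring). apply BL; lra.
    pose proof (Rabs_pos (b' - b)). unfold tl in *. nra. }
  assert (BK' : forall a b b', Rabs a <= sg -> Rabs b <= sg -> Rabs b' <= sg ->
     Rabs (lam K (P a b') - lam K (P a b)) <= tk * Rabs (b' - b)).
  { intros a b b' Ha Hb Hb'. replace (lam K (P a b') - lam K (P a b)) with
      (lam K (P a b') - lam K (P a b) - (b' - b) * lam K (DF2 p)) by (rewrite K2; ring). apply BK; lra. }
  set (NK := 1 + 6 * tk). set (NL := 6 * tl).
  assert (AK' : forall a a' b, Rabs a <= sg -> Rabs a' <= sg -> Rabs b <= sg ->
     Rabs (lam K (P a' b) - lam K (P a b)) <= NK * (Rabs (a' - a) + sqrt (Rabs (a' - a)))).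
  { intros a a' b Ha Ha' Hb. specialize (AK a a' b ltac:(lra) ltac:(lra) ltac:(lra)). rewrite K1 in AK.
    pose proof (sqrt_2bc b (a' - a) ltac:(lra)). pose proof (sqrt_pos (Rabs (a' - a))).
    pose proof (Rabs_pos (a' - a)).
    rewrite Rmult_1_r in AK.
    pose proof (Rabs_triang (lam K (P a' b) - lam K (P a b) - (a' - a)) (a' - a)).
    replace (lam K (P a' b) - lam K (P a b) - (a' - a) + (a' - a)) with
      (lam K (P a' b) - lam K (P a b)) in H2 by ring.
    assert (tk * sqrt (Rabs (2 * b * (a' - a))) <= tk * (2 * sqrt (Rabs (a' - a)))) by (apply Rmult_le_compat_l; auto).
    unfold NK. nra. }
  assert (AL' : forall a a' b, Rabs a <= sg -> Rabs a' <= sg -> Rabs b <= sg ->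
     Rabs (lam L (P a' b) - lam L (P a b)) <= NL * (Rabs (a' - a) + sqrt (Rabs (a' - a)))).
  { intros a a' b Ha Ha' Hb. specialize (AL a a' b ltac:(lra) ltac:(lra) ltac:(lra)). rewrite L1 in AL.
    pose proof (sqrt_2bc b (a' - a) ltac:(lra)). pose proof (sqrt_pos (Rabs (a' - a))).
    pose proof (Rabs_pos (a' - a)).
    replace (lam L (P a' b) - lam L (P a b) - (a' - a) * 0) with (lam L (P a' b) - lam L (P a b)) in AL by ring.
    assert (tl * sqrt (Rabs (2 * b * (a' - a))) <= tl * (2 * sqrt (Rabs (a' - a)))) by (apply Rmult_le_compat_l; auto).
    unfold NL. nra. }
  clear EK EL BL BK AK AL.
  assert (Hcl : forall a, Rabs (clamp sg a) <= sg) by (intros; apply clamp_bound; lra).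
  assert (G : forall a, {b | -sg <= b <= sg /\ lam L (P (clamp sg a) b) - lam L w = 0}).
  { intros a. set (ca := clamp sg a).
    assert (Hca : Rabs ca <= sg) by apply Hcl.
    destruct (IVT (fun b => lam L (P ca (clamp sg b)) - lam L w) (-sg) sg) as [b [Hb Hb0]].
    - apply (cont_mod _ (3/2)); [lra|]. intros x y.
      pose proof (BL' ca (clamp sg y) (clamp sg x) Hca (Hcl y) (Hcl x)) as B.
      pose proof (clamp_lip sg x y ltac:(lra)).
      pose proof (sqrt_pos (Rabs (x - y))).
      apply abs_betw in B.
      set (D := clamp sg x - clamp sg y) in *.
      apply Rabs_le. pose proof (Rabs_pos D). pose proof (Rle_abs D). assert (-D <= Rabs D) by (rewrite <- Rabs_Ropp; apply Rle_abs).
      split; nra.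
    - lra.
    - simpl. rewrite clamp_id by lra.
      pose proof (EL' ca (-sg) Hca ltac:(rewrite Rabs_Ropp, Rabs_right; lra)).
      apply abs_betw in Hw2. lra.
    - simpl. rewrite clamp_id by lra.
      pose proof (EL' ca sg Hca ltac:(rewrite Rabs_right; lra)).
      apply abs_betw in Hw2. lra.
    - exists b. split; auto. rewrite clamp_id in Hb0 by lra. exact Hb0. }
  set (g := fun a => proj1_sig (G a)).
  assert (Hg : forall a, -sg <= g a <= sg /\ lam L (P (clamp sg a) (g a)) - lam L w = 0)
    by (intros; unfold g; apply proj2_sig).
  assert (Hgb : forall a, Rabs (g a) <= sg) by (intros a; apply Rabs_le; apply Hg).
  set (psi := fun a => lam K (P (clamp sg a) (g a)) - lam K w).
  destruct (IVT psi (-sg) sg) as [a [Ha Ha0]].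
  - apply (cont_mod _ (2 * tk * NL + NK)). unfold NL, NK; nra.
    intros x y. unfold psi.
    set (cx := clamp sg x). set (cy := clamp sg y).
    pose proof (Hcl x) as Hcx. pose proof (Hcl y) as Hcy. fold cx in Hcx. fold cy in Hcy.
    set (Mo := Rabs (cx - cy) + sqrt (Rabs (cx - cy))).
    assert (HMo : Mo <= Rabs (x - y) + sqrt (Rabs (x - y))).
    { unfold Mo. pose proof (clamp_lip sg x y ltac:(lra)). fold cx cy in H.
      pose proof (sqrt_le_mono (Rabs (cx - cy)) (Rabs (x - y)) ltac:(split; [apply Rabs_pos|auto])). lra. }
    assert (HMo0 : 0 <= Mo) by (unfold Mo; pose proof (Rabs_pos (cx - cy)); pose proof (sqrt_pos (Rabs (cx - cy))); lra).
    assert (Dg : Rabs (g x - g y) <= 2 * NL * Mo).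
    { pose proof (BL' cx (g y) (g x) Hcx (Hgb y) (Hgb x)) as B.
      pose proof (AL' cy cx (g y) Hcy Hcx (Hgb y)) as A.
      destruct (Hg x) as [_ Ex]. destruct (Hg y) as [_ Ey]. fold cx in Ex. fold cy in Ey.
      unfold Mo. 
      apply abs_betw in B. apply abs_betw in A.
      set (D := g x - g y) in *.
      destruct (Rle_or_lt 0 D).
      + rewrite Rabs_right in * by lra. lra.
      + rewrite Rabs_left in * by lra. lra. }
    pose proof (BK' cx (g y) (g x) Hcx (Hgb y) (Hgb x)) as B.
    pose proof (AK' cy cx (g y) Hcy Hcx (Hgb y)) as A. fold Mo in A.
    replace (lam K (P cx (g x)) - lam K w - (lam K (P cy (g y)) - lam K w)) with
      ((lam K (P cx (g x)) - lam K (P cx (g y))) + (lam K (P cx (g y)) - lam K (P cy (g y)))) by ring.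
    eapply Rle_trans. apply Rabs_triang.
    assert (tk * Rabs (g x - g y) <= tk * (2 * NL * Mo)) by (apply Rmult_le_compat_l; auto).
    assert ((2 * tk * NL + NK) * Mo <= (2 * tk * NL + NK) * (Rabs (x - y) + sqrt (Rabs (x - y)))).
    { apply Rmult_le_compat_l; auto. unfold NL, NK; nra. }
    nra.
  - lra.
  - unfold psi. rewrite clamp_id by lra.
    pose proof (EK' (-sg) (g (-sg)) ltac:(rewrite Rabs_Ropp, Rabs_right; lra) (Hgb _)).
    apply abs_betw in Hw1. lra.
  - unfold psi. rewrite clamp_id by lra.
    pose proof (EK' sg (g sg) ltac:(rewrite Rabs_right; lra) (Hgb _)).
    apply abs_betw in Hw1. lra.
  - exists (hmul q0 (wprod ((true, clamp sg a) :: (false, g a) :: nil))). split.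
    + eapply Rle_lt_trans. apply (nrm_wprod d Hd cm Hc1 Hc2).
      simpl. pose proof (Hcl a). pose proof (Hgb a).
      assert (0 <= cm). { pose proof (d_pos d Hd h0 (seg1 1)). unfold nrm in *. lra. }
      nra.
    + apply (lam_inj (DF1 p) (DF2 p)); auto.
      * fold K. unfold psi in Ha0. fold (Phi F p r q0 (clamp sg a) (g a)). fold P. lra.
      * fold L. destruct (Hg a) as [_ E]. fold (Phi F p r q0 (clamp sg a) (g a)). fold P. lra.
Qed.


Lemma Rpower_pos x y : 0 < Rpower x y.
Proof. unfold Rpower. apply exp_pos. Qed.

Lemma local_lemma d alpha F DF1 DF2 p eps q0 :
  is_homog_dist d -> 0 < alpha <= 1 -> C1alpha_h d alpha F DF1 DF2 ->
  hdet (DF1 p) (DF2 p) <> 0 -> d h0 q0 < eps ->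
  exists rho rb, 0 < rho /\ 0 < rb /\
    forall w, Rabs (fst w - fst (linL (DF1 p) (DF2 p) q0)) < rho ->
              Rabs (snd w - snd (linL (DF1 p) (DF2 p) q0)) < rho ->
    forall r, 0 <= r <= rb -> image2 (Fpr F DF1 DF2 p r) (hball d h0 eps) w.
Proof.
  intros Hd Hal [HX1 [HX2 Hhol]] Hdet Hq0.
  set (v1 := DF1 p) in *. set (v2 := DF2 p) in *.
  set (cm := Rmax (nrm d (seg1 1)) (nrm d (seg2 1))).
  assert (Hc1 : nrm d (seg1 1) <= cm) by apply Rmax_l.
  assert (Hc2 : nrm d (seg2 1) <= cm) by apply Rmax_r.
  assert (Hcm : 0 <= cm). { pose proof (d_pos d Hd h0 (seg1 1)). unfold nrm in *. lra. }
  assert (Hn0 : 0 <= nrm d q0) by (apply d_pos; auto).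
  set (m := eps - nrm d q0).
  assert (Hm : 0 < m) by (unfold m, nrm; lra).
  set (sg := Rmin 1 (m / (4 * cm + 4))).
  assert (Hsg : 0 < sg <= 1).
  { unfold sg. split. apply Rmin_glb_lt. lra. apply Rdiv_lt_0_compat; lra. apply Rmin_l. }
  assert (Hsg2 : sg * (4 * cm + 4) <= m).
  { pose proof (Rmin_r 1 (m / (4 * cm + 4))). fold sg in H.
    apply (Rmult_le_compat_r (4 * cm + 4)) in H; [|lra]. field_simplify in H; lra. }
  set (Lam := wlen (w0 q0)).
  assert (HLam : 0 <= Lam) by apply wlen_nonneg.
  set (Rz := nrm d q0 + (Lam + 10) * cm).
  assert (HRz : 0 <= Rz) by (unfold Rz; nra).
  set (K := kk v1 v2). set (L := ll v1 v2).
  assert (HnK : 0 <= nl K) by (unfold nl; pose proof (Rabs_pos (fst K)); pose proof (Rabs_pos (snd K)); lra).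
  assert (HnL : 0 <= nl L) by (unfold nl; pose proof (Rabs_pos (fst L)); pose proof (Rabs_pos (snd L)); lra).
  set (kap := nl K + nl L).
  set (th := Rmin (1 / (2 * kap + 2)) (sg / (4 * (kap + 1) * (Lam + 2)))).
  assert (Hth : 0 < th).
  { unfold th. apply Rmin_glb_lt; apply Rdiv_lt_0_compat; unfold kap; nra. }
  assert (Hth1 : th * (2 * kap + 2) <= 1).
  { pose proof (Rmin_l (1 / (2 * kap + 2)) (sg / (4 * (kap + 1) * (Lam + 2)))). fold th in H.
    apply (Rmult_le_compat_r (2 * kap + 2)) in H; [|unfold kap; lra]. field_simplify in H; unfold kap in *; lra. }
  assert (Hth2 : th * (4 * (kap + 1) * (Lam + 2)) <= sg).
  { pose proof (Rmin_r (1 / (2 * kap + 2)) (sg / (4 * (kap + 1) * (Lam + 2)))). fold th in H.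
    apply (Rmult_le_compat_r (4 * (kap + 1) * (Lam + 2))) in H; [|unfold kap; nra].
    field_simplify in H; unfold kap in *; nra. }
  set (rho := sg / (4 * (kap + 1))).
  assert (Hrho : 0 < rho) by (unfold rho; apply Rdiv_lt_0_compat; unfold kap; lra).
  assert (Hrho2 : rho * (4 * (kap + 1)) = sg) by (unfold rho; field; unfold kap; lra).
  destruct (Hhol (nrm d p + Rz + 1)) as [C HC].
  { pose proof (d_pos d Hd h0 p). unfold nrm. lra. }
  set (zeta := Rpower (th / (Rabs C + 1)) (1 / alpha)).
  assert (Hzeta : 0 < zeta) by apply Rpower_pos.
  set (rb := Rmin 1 (zeta / (Rz + 1))).
  assert (Hrb : 0 < rb) by (unfold rb; apply Rmin_glb_lt; [lra|apply Rdiv_lt_0_compat; lra]).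
  assert (Hrb1 : rb <= 1) by apply Rmin_l.
  assert (Hrb2 : rb * Rz < zeta).
  { pose proof (Rmin_r 1 (zeta / (Rz + 1))). fold rb in H.
    apply Rle_lt_trans with (zeta / (Rz + 1) * Rz). apply Rmult_le_compat_r; auto.
    apply (Rmult_lt_reg_r (Rz + 1)). lra. field_simplify; lra. }
  exists rho, rb. split; auto. split; auto.
  intros w Hw1 Hw2 r Hr.
  assert (Hwk : Rabs (lam K w - hx1 q0) <= sg / 4).
  { rewrite <- (kk_linL v1 v2 q0 Hdet). fold K.
    eapply Rle_trans. apply lam_sub_bound.
    assert (Rmax (Rabs (fst w - fst (linL v1 v2 q0))) (Rabs (snd w - snd (linL v1 v2 q0))) <= rho)
      by (apply Rmax_lub; lra).
    assert (nl K * Rmax (Rabs (fst w - fst (linL v1 v2 q0))) (Rabs (snd w - snd (linL v1 v2 q0))) <= nl K * rho)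
      by (apply Rmult_le_compat_l; auto).
    assert (nl K * rho <= (kap + 1) * rho) by (apply Rmult_le_compat_r; unfold kap; lra).
    lra. }
  assert (Hwl : Rabs (lam L w - hx2 q0) <= sg / 4).
  { rewrite <- (ll_linL v1 v2 q0 Hdet). fold L.
    eapply Rle_trans. apply lam_sub_bound.
    assert (Rmax (Rabs (fst w - fst (linL v1 v2 q0))) (Rabs (snd w - snd (linL v1 v2 q0))) <= rho)
      by (apply Rmax_lub; lra).
    assert (nl L * Rmax (Rabs (fst w - fst (linL v1 v2 q0))) (Rabs (snd w - snd (linL v1 v2 q0))) <= nl L * rho)
      by (apply Rmult_le_compat_l; auto).
    assert (nl L * rho <= (kap + 1) * rho) by (apply Rmult_le_compat_r; unfold kap; lra).
    lra. }
  destruct (Req_dec r 0) as [Hr0|Hr0].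
  -
    subst r. set (a := lam K w - hx1 q0). set (b := lam L w - hx2 q0).
    exists (hmul q0 (wprod ((true, a) :: (false, b) :: nil))). split.
    + unfold hball. eapply Rle_lt_trans. apply (nrm_wprod d Hd cm Hc1 Hc2).
      change (wlen ((true, a) :: (false, b) :: nil)) with (Rabs a + (Rabs b + 0)).
      assert ((Rabs a + (Rabs b + 0)) * cm <= sg / 2 * cm) by (apply Rmult_le_compat_r; unfold a, b; lra).
      unfold m in Hsg2. unfold nrm at 1. unfold nrm in Hsg2. nra.
    + unfold Fpr. destruct (Req_EM_T 0 0) as [_|C0]; [|lra].
      apply (lam_inj v1 v2); auto; fold K L.
      * unfold K; rewrite kk_linL by auto; fold K. unfold a. simpl. lra.
      * unfold L; rewrite ll_linL by auto; fold L. unfold b. simpl. lra.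
  - assert (Hrp : 0 < r) by lra.
    destruct (solve_pos d F DF1 DF2 p r q0 eps w cm th Rz sg Hd HX1 HX2 Hc1 Hc2 Hrp Hdet)
      as [q [Hq Hgq]].
    + intros y Hy.
      set (x := hmul p (hdil r y)).
      destruct (Hpt_eq_dec x p) as [Ex|Nx].
      * rewrite Ex. unfold mat_norm, vsub. simpl. unfold Rminus. rewrite !Rplus_opp_r, !Rabs_R0, !Rmax_left; lra.
      * assert (Hdpx : d p x = r * nrm d y) by (apply d_p_dil; auto).
        assert (Hpos : 0 < d x p).
        { rewrite d_sym by auto. destruct (d_pos d Hd p x) as [H|H]; auto.
          exfalso. apply Nx. symmetry. destruct Hd as (_&Hd0&_). apply Hd0. auto. }
        assert (Hny : 0 <= nrm d y) by (apply d_pos; auto).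
        eapply Rle_trans. apply HC; auto.
        -- eapply Rle_lt_trans. apply (d_tri d Hd h0 p x). fold (nrm d p). rewrite Hdpx. nra.
        -- pose proof (d_pos d Hd h0 p). fold (nrm d p). lra.
        -- assert (Rpower (d x p) alpha <= th / (Rabs C + 1)).
           { replace (th / (Rabs C + 1)) with (Rpower zeta alpha).
             apply Rle_Rpower_l. lra. split; auto.
             rewrite d_sym, Hdpx by auto. nra.
             unfold zeta. rewrite Rpower_mult. replace (1 / alpha * alpha) with 1 by (field; lra).
             apply Rpower_1. apply Rdiv_lt_0_compat. lra. pose proof (Rabs_pos C). lra. }
           pose proof (Rpower_pos (d x p) alpha).
           assert (C * Rpower (d x p) alpha <= Rabs C * Rpower (d x p) alpha)
             by (apply Rmult_le_compat_r; [lra|apply Rle_abs]).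
           assert (Rabs C * Rpower (d x p) alpha <= Rabs C * (th / (Rabs C + 1)))
             by (apply Rmult_le_compat_l; [apply Rabs_pos|auto]).
           assert (Rabs C * (th / (Rabs C + 1)) <= th).
           { pose proof (Rabs_pos C). apply (Rmult_le_reg_r (Rabs C + 1)). lra.
             field_simplify; nra. }
           lra.
    + exact Hsg.
    + unfold m in Hsg2. nra.
    + unfold Rz, Lam. lra.
    + lra.
    + change (nl L * th <= 1/2). assert (nl L * th <= (kap + 1) * th) by (apply Rmult_le_compat_r; unfold kap; lra). lra.
    + change (nl K * th * (Lam + 2) <= sg / 4). assert (nl K * th * (Lam + 2) <= (kap + 1) * th * (Lam + 2)).
      { apply Rmult_le_compat_r. lra. apply Rmult_le_compat_r; unfold kap; lra. } lra.
    + change (nl L * th * (Lam + 2) <= sg / 4). assert (nl L * th * (Lam + 2) <= (kap + 1) * th * (Lam + 2)).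
      { apply Rmult_le_compat_r. lra. apply Rmult_le_compat_r; unfold kap; lra. } lra.
    + exact Hwk.
    + exact Hwl.
    + exists q. split; [exact Hq|]. unfold Fpr. destruct (Req_EM_T r 0); [lra|]. exact Hgq.
Qed.


Lemma abs_le_dist2_1 z w : Rabs (fst z - fst w) <= dist2 z w.
Proof.
  unfold dist2. rewrite <- sqrt_Rsqr_abs. apply sqrt_le_mono. unfold Rsqr.
  set (a := fst z - fst w). set (b := snd z - snd w).
  replace (a ^ 2 + b ^ 2) with (a * a + b * b) by ring. split; nra.
Qed.
Lemma abs_le_dist2_2 z w : Rabs (snd z - snd w) <= dist2 z w.
Proof.
  unfold dist2. rewrite <- sqrt_Rsqr_abs. apply sqrt_le_mono. unfold Rsqr.
  set (a := fst z - fst w). set (b := snd z - snd w).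
  replace (a ^ 2 + b ^ 2) with (a * a + b * b) by ring. split; nra.
Qed.

Theorem mainTheorem13 (d : Hpt -> Hpt -> R) (alpha : R)
  (F : Hpt -> R * R) (DF1 DF2 : Hpt -> R * R) (p : Hpt) :
  is_homog_dist d ->
  0 < alpha <= 1 ->
  C1alpha_h d alpha F DF1 DF2 ->
  hdet (DF1 p) (DF2 p) <> 0 ->
  forall eps, 0 < eps ->
  forall K : R * R -> Prop,
    compact2 K ->
    (forall z, K z -> image2 (linL (DF1 p) (DF2 p)) (hball d h0 eps) z) ->
    exists rbar, 0 < rbar /\
      forall r, 0 <= r <= rbar ->
        forall z, K z -> image2 (Fpr F DF1 DF2 p r) (hball d h0 eps) z.
Proof.
  intros Hd Hal HC Hdet eps Heps K HK Hsub.
  set (Pg := fun x : Hpt * R * R =>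
    0 < snd (fst x) /\ 0 < snd x /\
    forall w, Rabs (fst w - fst (linL (DF1 p) (DF2 p) (fst (fst x)))) < snd (fst x) ->
              Rabs (snd w - snd (linL (DF1 p) (DF2 p) (fst (fst x)))) < snd (fst x) ->
    forall r, 0 <= r <= snd x -> image2 (Fpr F DF1 DF2 p r) (hball d h0 eps) w).
  set (I := {x : Hpt * R * R | Pg x}).
  set (U := fun (i : I) (w : R * R) =>
    Rabs (fst w - fst (linL (DF1 p) (DF2 p) (fst (fst (proj1_sig i))))) < snd (fst (proj1_sig i)) /\
    Rabs (snd w - snd (linL (DF1 p) (DF2 p) (fst (fst (proj1_sig i))))) < snd (fst (proj1_sig i))).
  destruct (HK I U) as [l Hl].
  - intros i z [H1 H2].
    set (c := linL (DF1 p) (DF2 p) (fst (fst (proj1_sig i)))) in *.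
    set (rho := snd (fst (proj1_sig i))) in *.
    exists (Rmin (rho - Rabs (fst z - fst c)) (rho - Rabs (snd z - snd c))). split.
    + apply Rmin_glb_lt; lra.
    + intros w Hw. pose proof (Rmin_l (rho - Rabs (fst z - fst c)) (rho - Rabs (snd z - snd c))).
      pose proof (Rmin_r (rho - Rabs (fst z - fst c)) (rho - Rabs (snd z - snd c))).
      pose proof (abs_le_dist2_1 z w). pose proof (abs_le_dist2_2 z w).
      unfold U. fold c rho. split.
      * replace (fst w - fst c) with ((fst z - fst c) - (fst z - fst w)) by ring.
        pose proof (Rabs_triang (fst z - fst c) (- (fst z - fst w))). rewrite Rabs_Ropp in H5.
        unfold Rminus at 1. lra.
      * replace (snd w - snd c) with ((snd z - snd c) - (snd z - snd w)) by ring.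
        pose proof (Rabs_triang (snd z - snd c) (- (snd z - snd w))). rewrite Rabs_Ropp in H5.
        unfold Rminus at 1. lra.
  - intros z Kz. destruct (Hsub z Kz) as [q0 [Hq0 Eq]].
    destruct (local_lemma d alpha F DF1 DF2 p eps q0 Hd Hal HC Hdet Hq0) as [rho [rb [Hrho [Hrb Hloc]]]].
    assert (Hp : Pg (q0, rho, rb)) by (unfold Pg; simpl; auto).
    exists (exist _ (q0, rho, rb) Hp). unfold U; cbn [proj1_sig fst snd]. rewrite Eq.
    unfold Rminus. rewrite !Rplus_opp_r, Rabs_R0. lra.
  - set (rbar := fold_right (fun (i : I) acc => Rmin (snd (proj1_sig i)) acc) 1 l).
    assert (Hpos : 0 < rbar /\ forall i, In i l -> rbar <= snd (proj1_sig i)).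
    { unfold rbar. clear. induction l as [|i l [IH1 IH2]]; simpl.
      - split; [lra|]. intros _ [].
      - destruct (proj2_sig i) as [_ [Hi _]]. split.
        + apply Rmin_glb_lt; auto.
        + intros j [<-|Hj]. apply Rmin_l. eapply Rle_trans. apply Rmin_r. auto. }
    destruct Hpos as [Hpos Hle].
    exists rbar. split; auto.
    intros r Hr z Kz. destruct (Hl z Kz) as [i [Hi [U1 U2]]].
    destruct (proj2_sig i) as [_ [_ Hloc]].
    apply Hloc; auto. specialize (Hle i Hi). lra.
Qed.
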